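(* Let $\mathcal M$ be a closed subspace of $H^2_p$ with $S^*\mathcal M\subset\mathcal M$ and $\ker S^*\subset\mathcal M$. Then $R_{\mathcal M}=S^*P_{\mathcal M}S$, $R_{\mathcal M}S^*=S^*P_{\mathcal M}$, and $Q_{\mathcal M}=P_{\mathcal M}S$.
   Context: $S$ is the forward shift on $H^2_p$; $P_{\mathcal M}$ is the orthogonal projection of $H^2_p$ onto $\mathcal M$; $R_{\mathcal M}$ is the orthogonal projection of $H^2_p$ onto $S^*\mathcal M$; $Q_{\mathcal M}=SR_{\mathcal M}$. *)

(* Defs.v *)
From HB Require Import structures.
From mathcomp Require Import all_boot all_order all_algebra.
From mathcomp Require Import complex.
From mathcomp Require Import all_classical all_reals all_analysis.
Set Implicit Arguments. Unset Strict Implicit. Unset Printing Implicit Defensive.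
Import Order.TTheory GRing.Theory Num.Theory numFieldNormedType.Exports.
Local Open Scope ring_scope.
Local Open Scope classical_set_scope.

(* H^2_p is modelled (isometrically, via Taylor coefficients) as sequences
   f : nat -> 'I_p -> C of C^p-valued coefficients f n = \hat f(n),
   square-summable. *)
Definition seqp (R : realType) (p : nat) := nat -> 'I_p -> R[i].

Section H2.
Variables (R : realType) (p : nat).
Local Notation T := (seqp R p).

Definition sqmod (z : R[i]) : R := (complex.Re z) ^+ 2 + (complex.Im z) ^+ 2.

Definition coef_sqnorm (f : T) (n : nat) : R := \sum_(j < p) sqmod (f n j).

Definition H2 : set T := [set f | cvgn (series (coef_sqnorm f))].

Definition H2sqnorm (f : T) : R := limn (series (coef_sqnorm f)).

Definition coef_ip (f g : T) (n : nat) : R[i] :=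
  \sum_(j < p) f n j * (g n j)^*%C.
Definition ip (f g : T) : R[i] :=
  complex.Complex (limn (series (fun n => complex.Re (coef_ip f g n))))
          (limn (series (fun n => complex.Im (coef_ip f g n)))).

Definition addT (f g : T) : T := fun n j => f n j + g n j.
Definition scaleT (a : R[i]) (f : T) : T := fun n j => a * f n j.
Definition subT (f g : T) : T := fun n j => f n j - g n j.
Definition zeroT : T := fun _ _ => 0.

Definition closed_subspace (M : set T) : Prop :=
  M `<=` H2 /\ M zeroT /\
  (forall f g, M f -> M g -> M (addT f g)) /\
  (forall a f, M f -> M (scaleT a f)) /\
  (forall (x : nat -> T) (f : T), (forall k, M (x k)) -> H2 f ->
     (fun k => H2sqnorm (subT (x k) f)) @ \oo --> (0 : R) -> M f).

(* forward shift S (multiplication by z) and its adjoint S^* *)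
Definition S (f : T) : T := fun n => if n is n'.+1 then f n' else fun _ => 0.
Definition Sstar (f : T) : T := fun n => f n.+1.

Definition ker_Sstar : set T := [set f | H2 f /\ Sstar f = zeroT].

(* P is the orthogonal projection of H^2_p onto N :
   for every f in H^2_p, P f lies in N and f - P f is orthogonal to N.
   (Values of P outside H^2_p are irrelevant.) *)
Definition is_orth_proj (N : set T) (P : T -> T) : Prop :=
  forall f, H2 f -> N (P f) /\ (forall m, N m -> ip (subT f (P f)) m = 0).

End H2.

Arguments H2 {R p}.
Arguments S {R p}.
Arguments Sstar {R p}.
Arguments ker_Sstar {R p}.
Arguments closed_subspace {R p}.
Arguments is_orth_proj {R p}.
Arguments ip {R p}.

(* Main.v *)
Require Import Defs.
From HB Require Import structures.
From mathcomp Require Import all_boot all_order all_algebra.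
From mathcomp Require Import complex.
From mathcomp Require Import all_classical all_reals all_analysis.
From mathcomp Require Import ring lra.
Import Order.TTheory GRing.Theory Num.Theory numFieldNormedType.Exports.
Set Implicit Arguments. Unset Strict Implicit.
Local Open Scope ring_scope.
Local Open Scope classical_set_scope.

Lemma sqmod_ge0 (R : realType) (z : R[i]) : 0 <= sqmod z.
Proof. by rewrite /sqmod addr_ge0 // sqr_ge0. Qed.

Lemma coef_sqnorm_ge0 (R : realType) p (f : seqp R p) n : 0 <= coef_sqnorm f n.
Proof. by rewrite /coef_sqnorm sumr_ge0 // => j _; apply: sqmod_ge0. Qed.

Lemma ReD' (R : realType) (x y : R[i]) : complex.Re (x + y) = complex.Re x + complex.Re y.
Proof. by case: x; case: y. Qed.
Lemma ImD' (R : realType) (x y : R[i]) : complex.Im (x + y) = complex.Im x + complex.Im y.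
Proof. by case: x; case: y. Qed.

Lemma ReB' (R : realType) (x y : R[i]) : complex.Re (x - y) = complex.Re x - complex.Re y.
Proof. by case: x; case: y. Qed.
Lemma ImB' (R : realType) (x y : R[i]) : complex.Im (x - y) = complex.Im x - complex.Im y.
Proof. by case: x; case: y. Qed.

Lemma Re_sum (R : realType) p (F : 'I_p -> R[i]) :
  complex.Re (\sum_(j < p) F j) = \sum_(j < p) complex.Re (F j).
Proof. exact: (big_morph _ (@ReD' R) (erefl _)). Qed.
Lemma Im_sum (R : realType) p (F : 'I_p -> R[i]) :
  complex.Im (\sum_(j < p) F j) = \sum_(j < p) complex.Im (F j).
Proof. exact: (big_morph _ (@ImD' R) (erefl _)). Qed.

Lemma ReMc (R : realType) (a b : R[i]) :
  complex.Re (a * b^*%C) = complex.Re a * complex.Re b + complex.Im a * complex.Im b.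
Proof. by case: a => a1 a2; case: b => b1 b2 /=; ring. Qed.
Lemma ImMc (R : realType) (a b : R[i]) :
  complex.Im (a * b^*%C) = complex.Im a * complex.Re b - complex.Re a * complex.Im b.
Proof. by case: a => a1 a2; case: b => b1 b2 /=; ring. Qed.

Lemma ReMc_le (R : realType) (a b : R[i]) :
  `|complex.Re (a * b^*%C)| <= sqmod a + sqmod b.
Proof.
rewrite ReMc /sqmod; case: a => a1 a2; case: b => b1 b2 /=.
have h1 := sqr_ge0 (a1 - b1); have h2 := sqr_ge0 (a1 + b1).
have h3 := sqr_ge0 (a2 - b2); have h4 := sqr_ge0 (a2 + b2).
rewrite ler_norml; apply/andP; split; nra.
Qed.
Lemma ImMc_le (R : realType) (a b : R[i]) :
  `|complex.Im (a * b^*%C)| <= sqmod a + sqmod b.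
Proof.
rewrite ImMc /sqmod; case: a => a1 a2; case: b => b1 b2 /=.
have h1 := sqr_ge0 (a2 - b1); have h2 := sqr_ge0 (a2 + b1).
have h3 := sqr_ge0 (a1 - b2); have h4 := sqr_ge0 (a1 + b2).
rewrite ler_norml; apply/andP; split; nra.
Qed.

Lemma cvg_ip (R : realType) p (f g : seqp R p) : H2 f -> H2 g ->
  cvgn (series (fun n => complex.Re (coef_ip f g n))) /\
  cvgn (series (fun n => complex.Im (coef_ip f g n))).
Proof.
move=> Hf Hg; have cv := is_cvg_seriesD Hf Hg.
split; apply: normed_cvg; apply: (series_le_cvg _ _ _ cv) => n //=;
  try (by rewrite /= addr_ge0 // coef_sqnorm_ge0).
- rewrite /coef_ip Re_sum; apply: le_trans (ler_norm_sum _ _ _) _.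
  have -> : (coef_sqnorm f + coef_sqnorm g) n = coef_sqnorm f n + coef_sqnorm g n by []. rewrite /coef_sqnorm -big_split /=; apply: ler_sum => j _; exact: ReMc_le.
- rewrite /coef_ip Im_sum; apply: le_trans (ler_norm_sum _ _ _) _.
  have -> : (coef_sqnorm f + coef_sqnorm g) n = coef_sqnorm f n + coef_sqnorm g n by []. rewrite /coef_sqnorm -big_split /=; apply: ler_sum => j _; exact: ImMc_le.
Qed.

Lemma series_shiftS (R : realType) (u v : R^nat) : (forall n, v n = u n.+1) ->
  forall n, series u n.+1 = u 0%N + series v n.
Proof.
move=> hv n; rewrite !seriesEnat /= big_nat_recl //; congr (_ + _).
by apply: eq_bigr => i _; rewrite hv.
Qed.

Lemma shift_lim (R : realType) (u v : R^nat) : (forall n, v n = u n.+1) ->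
  cvgn (series v) -> cvgn (series u) /\ limn (series u) = u 0%N + limn (series v).
Proof.
move=> hv cv.
have h : [sequence series u n.+1]_n @ \oo --> u 0%N + limn (series v).
  have -> : [sequence series u n.+1]_n = (fun n => u 0%N + series v n).
    by apply: funext => n /=; rewrite (@series_shiftS _ u v hv).
  apply: cvgD; [exact: cvg_cst | exact: cv].
rewrite cvg_shiftS in h; split; first exact: cvgP h.
exact: cvg_lim h.
Qed.

Lemma shift_cvg (R : realType) (u v : R^nat) : (forall n, v n = u n.+1) ->
  cvgn (series u) -> cvgn (series v).
Proof.
move=> hv cu.
have h : [sequence series u n.+1]_n @ \oo --> limn (series u) by rewrite cvg_shiftS.
have -> : series v = (fun n => series u n.+1 - u 0%N).
  by apply: funext => n /=; rewrite (@series_shiftS _ u v hv) [u 0%N + _]addrC addrK.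
apply: cvgP; apply: cvgB; [exact: h | exact: cvg_cst].
Qed.

Lemma sqmod0 (R : realType) : sqmod (0 : R[i]) = 0.
Proof. by rewrite /sqmod /= expr2 mulr0 addr0. Qed.

Lemma H2_subT (R : realType) p (f g : seqp R p) : H2 f -> H2 g -> H2 (subT f g).
Proof.
move=> Hf Hg; have cv := is_cvg_seriesD (is_cvg_seriesD Hf Hg) (is_cvg_seriesD Hf Hg).
apply: (series_le_cvg _ _ _ cv) => n; first exact: coef_sqnorm_ge0.
  by rewrite /= !addr_ge0 // coef_sqnorm_ge0.
rewrite /=.
have -> : (coef_sqnorm f + coef_sqnorm g + (coef_sqnorm f + coef_sqnorm g)) n =
  coef_sqnorm f n + coef_sqnorm g n + (coef_sqnorm f n + coef_sqnorm g n) by [].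
rewrite /coef_sqnorm -!big_split /=.
apply: ler_sum => j _; rewrite /sqmod /subT.
case: (f n j) => a1 a2; case: (g n j) => b1 b2 /=.
have h1 := sqr_ge0 (a1 + b1); have h2 := sqr_ge0 (a2 + b2). nra.
Qed.

Lemma coef_S0 (R : realType) p (f : seqp R p) : coef_sqnorm (S f) 0 = 0.
Proof. by rewrite /coef_sqnorm big1 // => j _; rewrite sqmod0. Qed.

Lemma H2_S (R : realType) p (f : seqp R p) : H2 f -> H2 (S f).
Proof.
move=> Hf; have := @shift_lim R (coef_sqnorm (S f)) (coef_sqnorm f) (fun n => erefl) Hf.
by case.
Qed.

Lemma H2_Sstar (R : realType) p (f : seqp R p) : H2 f -> H2 (Sstar f).
Proof.
move=> Hf; exact: (@shift_cvg R (coef_sqnorm f) (coef_sqnorm (Sstar f)) (fun n => erefl) Hf).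
Qed.

Lemma ip_subl (R : realType) p (u v m : seqp R p) : H2 u -> H2 v -> H2 m ->
  ip (subT u v) m = ip u m - ip v m.
Proof.
move=> Hu Hv Hm; have [c1 c2] := cvg_ip Hu Hm; have [d1 d2] := cvg_ip Hv Hm.
have E : forall n, coef_ip (subT u v) m n = coef_ip u m n - coef_ip v m n.
  by move=> n; rewrite /coef_ip -sumrB; apply: eq_bigr => j _; rewrite /subT mulrBl.
rewrite /ip.
have -> : (fun n => complex.Re (coef_ip (subT u v) m n)) =
   (fun n => complex.Re (coef_ip u m n)) - (fun n => complex.Re (coef_ip v m n)).
  by apply: funext => n; rewrite E ReB'.
have -> : (fun n => complex.Im (coef_ip (subT u v) m n)) =
   (fun n => complex.Im (coef_ip u m n)) - (fun n => complex.Im (coef_ip v m n)).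
  by apply: funext => n; rewrite E ImB'.
rewrite (lim_seriesB c1 d1) (lim_seriesB c2 d2) //.
Qed.

Lemma ip_Sstar_l (R : realType) p (h k : seqp R p) : H2 h -> H2 k ->
  ip (Sstar h) k = ip h (S k).
Proof.
move=> Hh Hk; have [c1 c2] := cvg_ip (H2_Sstar Hh) Hk.
have z : coef_ip h (S k) 0 = 0.
  by rewrite /coef_ip big1 // => j _; rewrite /S /= oppr0; exact: mulr0.
rewrite /ip.
have [_ ->] := @shift_lim R (fun n => complex.Re (coef_ip h (S k) n))
   (fun n => complex.Re (coef_ip (Sstar h) k n)) (fun n => erefl) c1.
have [_ ->] := @shift_lim R (fun n => complex.Im (coef_ip h (S k) n))
   (fun n => complex.Im (coef_ip (Sstar h) k n)) (fun n => erefl) c2.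
by rewrite z /= !add0r.
Qed.

Lemma ip_S_l (R : realType) p (h k : seqp R p) : H2 h -> H2 k ->
  ip (S h) k = ip h (Sstar k).
Proof.
move=> Hh Hk; have [c1 c2] := cvg_ip Hh (H2_Sstar Hk).
have z : coef_ip (S h) k 0 = 0.
  by rewrite /coef_ip big1 // => j _; rewrite /S /= mul0r.
rewrite /ip.
have [_ ->] := @shift_lim R (fun n => complex.Re (coef_ip (S h) k n))
   (fun n => complex.Re (coef_ip h (Sstar k) n)) (fun n => erefl) c1.
have [_ ->] := @shift_lim R (fun n => complex.Im (coef_ip (S h) k n))
   (fun n => complex.Im (coef_ip h (Sstar k) n)) (fun n => erefl) c2.
by rewrite z /= !add0r.
Qed.

Lemma ip_zero_r (R : realType) p (h : seqp R p) : ip h (@zeroT R p) = 0.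
Proof.
rewrite /ip.
have -> : (fun n => complex.Re (coef_ip h (@zeroT R p) n)) = (fun _ => 0).
  by apply: funext => n; rewrite /coef_ip big1 // => j _; rewrite /zeroT conjc0 mulr0.
have -> : (fun n => complex.Im (coef_ip h (@zeroT R p) n)) = (fun _ => 0).
  by apply: funext => n; rewrite /coef_ip big1 // => j _; rewrite /zeroT conjc0 mulr0.
have -> : series (fun _ : nat => (0 : R)) = (fun _ => 0).
  by apply: funext => n; rewrite seriesEnat /= big1.
by rewrite lim_cst.
Qed.

Lemma sq2_eq0 (R : realType) (a b : R) : a ^+ 2 + b ^+ 2 = 0 -> a = 0 /\ b = 0.
Proof.
move/eqP; rewrite paddr_eq0 ?sqr_ge0 // => /andP[/eqP + /eqP].
by move=> /eqP; rewrite sqrf_eq0 => /eqP -> /eqP; rewrite sqrf_eq0 => /eqP ->.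
Qed.

Lemma ip_self (R : realType) p (u : seqp R p) : H2 u -> ip u u = 0 -> u = @zeroT R p.
Proof.
move=> Hu /(congr1 (@complex.Re R)) /=.
have -> : (fun n => complex.Re (coef_ip u u n)) = coef_sqnorm u.
  apply: funext => n; rewrite /coef_ip Re_sum; apply: eq_bigr => j _.
  by rewrite ReMc /sqmod !expr2.
move=> L.
have nd : nondecreasing_seq (series (coef_sqnorm u)).
  by apply: nondecreasing_series => n _ _; exact: coef_sqnorm_ge0.
have cz : forall n, coef_sqnorm u n = 0.
  move=> n; apply/eqP; rewrite eq_le coef_sqnorm_ge0 andbT.
  have := nondecreasing_cvgn_le nd Hu n.+1; rewrite L.
  rewrite seriesEnat /= big_nat_recr //=; apply: le_trans.
  by rewrite lerDr sumr_ge0 // => i _; exact: coef_sqnorm_ge0.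
apply: funext => n; apply: funext => j.
have := cz n; rewrite /coef_sqnorm => /eqP; rewrite psumr_eq0; last first.
  by move=> i _; exact: sqmod_ge0.
move=> /allP /(_ j (mem_index_enum _)) /eqP; rewrite /sqmod /zeroT.
by case: (u n j) => a b /= /sq2_eq0 [-> ->].
Qed.

Lemma proj_unique (R : realType) p (N : set (seqp R p)) (P : seqp R p -> seqp R p) :
  N `<=` H2 -> (forall a b, N a -> N b -> N (subT a b)) -> is_orth_proj N P ->
  forall f x, H2 f -> N x -> (forall m, N m -> ip (subT f x) m = 0) -> P f = x.
Proof.
move=> NH Nsub HP f x Hf Nx Ox; have [Ny Oy] := HP f Hf.
have Nd := Nsub _ _ Ny Nx.
have e1 := Ox _ Nd; have e2 := Oy _ Nd.
have Hx := NH _ Nx; have Hy := NH _ Ny.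
have E : subT (subT f x) (subT f (P f)) = subT (P f) x.
  by apply: funext => n; apply: funext => j; rewrite /subT; ring.
have := ip_subl (H2_subT Hf Hx) (H2_subT Hf Hy) (NH _ Nd).
rewrite E e1 e2 subrr => /(ip_self (NH _ Nd)) Z.
apply: funext => n; apply: funext => j.
have := congr1 (fun F => F n j) Z; rewrite /subT /zeroT /= => /eqP.
by rewrite subr_eq0 => /eqP.
Qed.

Lemma M_subT (R : realType) p (M : set (seqp R p)) : closed_subspace M ->
  forall a b, M a -> M b -> M (subT a b).
Proof.
move=> [_ [_ [Madd [Mscale _]]]] a b Ma Mb.
have -> : subT a b = addT a (scaleT (-1) b).
  by apply: funext => n; apply: funext => j; rewrite /subT /addT /scaleT mulN1r.
exact: Madd _ _ Ma (Mscale _ _ Mb).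
Qed.

Theorem lemma4p2 (R : realType) (p : nat) (M : set (seqp R p))
    (P_M R_M : seqp R p -> seqp R p) :
  closed_subspace M ->
  Sstar @` M `<=` M ->
  ker_Sstar `<=` M ->
  is_orth_proj M P_M ->
  is_orth_proj (Sstar @` M) R_M ->
  (forall f, H2 f -> R_M f = Sstar (P_M (S f))) /\
  (forall f, H2 f -> R_M (Sstar f) = Sstar (P_M f)) /\
  (forall f, H2 f -> S (R_M f) = P_M (S f)).
Proof.
move=> cM SM KM HP HR.
have MH : M `<=` H2 by case: cM.
have Msub := M_subT cM.
have Madd : forall a b, M a -> M b -> M (addT a b) by case: cM => _ [_ []].
(* m0 := g - S (S* g) is in ker S* *)
have K0 : forall g, M g -> M (subT g (S (Sstar g))).
  move=> g Mg; apply: KM; split.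
    exact: H2_subT (MH _ Mg) (H2_S (H2_Sstar (MH _ Mg))).
  by apply: funext => n; apply: funext => j; rewrite /Sstar /subT /S subrr.
have SS : forall g, M g -> M (S (Sstar g)).
  move=> g Mg; have -> : S (Sstar g) = subT g (subT g (S (Sstar g))).
    by apply: funext => n; apply: funext => j; rewrite /subT; ring.
  exact: Msub _ _ Mg (K0 _ Mg).
have SMH : Sstar @` M `<=` H2 by move=> _ [g Mg <-]; exact: H2_Sstar (MH _ Mg).
have SMsub : forall a b, (Sstar @` M) a -> (Sstar @` M) b -> (Sstar @` M) (subT a b).
  by move=> _ _ [a Ma <-] [b Mb <-]; exists (subT a b) => //; exact: Msub.
have part1 : forall f, H2 f -> R_M f = Sstar (P_M (S f)).
  move=> f Hf; have [Mg Og] := HP _ (H2_S Hf).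
  apply: (proj_unique SMH SMsub HR Hf); first by exists (P_M (S f)).
  move=> _ [m Mm <-].
  have -> : subT f (Sstar (P_M (S f))) = Sstar (subT (S f) (P_M (S f))) by [].
  rewrite (ip_Sstar_l (H2_subT (H2_S Hf) (MH _ Mg)) (H2_Sstar (MH _ Mm))).
  exact: Og (SS _ Mm).
split; first exact: part1.
split.
  move=> f Hf; rewrite part1; last exact: H2_Sstar.
  set y := P_M (S (Sstar f)).
  have Hf0 : M (subT f (S (Sstar f))).
    apply: KM; split; first exact: H2_subT Hf (H2_S (H2_Sstar Hf)).
    by apply: funext => n; apply: funext => j; rewrite /Sstar /subT /S subrr.
  have [My Oy] := HP _ (H2_S (H2_Sstar Hf)).
  have -> : P_M f = addT y (subT f (S (Sstar f))).
    apply: (proj_unique MH Msub HP Hf); first exact: Madd.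
    move=> m Mm; rewrite -(Oy _ Mm); congr ip.
    by apply: funext => n; apply: funext => j; rewrite /subT /addT /y; ring.
  by apply: funext => n; apply: funext => j; rewrite /Sstar /addT /subT /S subrr addr0.
move=> f Hf; rewrite part1 //.
set g := P_M (S f).
have [Mg Og] := HP _ (H2_S Hf).
set g0 := subT g (S (Sstar g)).
have Mg0 : M g0 := K0 _ Mg.
have Hg0 := MH _ Mg0.
have Hh : H2 (subT f (Sstar g)) by exact: H2_subT Hf (H2_Sstar (MH _ Mg)).
have E : subT (S f) g = subT (S (subT f (Sstar g))) g0.
  apply: funext => -[|n]; apply: funext => j; rewrite /g0 /subT /S /Sstar /=; ring.
have := Og _ Mg0; rewrite E ip_subl //; last exact: H2_S.
rewrite ip_S_l //.
have -> : Sstar g0 = @zeroT R p.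
  by apply: funext => n; apply: funext => j; rewrite /Sstar /g0 /subT /S subrr.
rewrite ip_zero_r sub0r => /eqP; rewrite oppr_eq0 => /eqP /(ip_self Hg0) Z.
apply: funext => n; apply: funext => j.
have := congr1 (fun F => F n j) Z; rewrite /g0 /subT /zeroT /= => /eqP.
by rewrite subr_eq0 => /eqP.
Qed.
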